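(* Let $n\in\mathbb{N}$, let $\lambda$ be a partition with at most $2n$ parts and $\mu\subseteq\lambda$ a partition with at most $n$ parts, and let $Q\in Rec_{2n}(\lambda/\mu)$, with associated chain of partitions $$\lambda=\mu^{(0)}\supseteq\mu^{(1)}\supseteq\cdots\supseteq\mu^{(N)}=\mu ,$$ where each $\mu^{(i-1)}/\mu^{(i)}$ is a vertical strip with $Q[i]$ cells. For $1\le i\le N$ let $t_0^{(i)}$ be the slack and $\mathbf{r}^{(i)}$ the slack vector of the strip $\mu^{(i-1)}/\mu^{(i)}$, and put $t_0^{(0)}:=0$, $\mathbf{r}^{(0)}:=()$. Then for each $1\le i\le N$: (a) $\ell(\mu^{(i-1)})=Q[i]+t_0^{(i)}\ge \ell(\mu^{(i)})$; (b) $0\le t_0^{(i-1)}\le t_0^{(i)}\le \ell(\mu^{(i)})\le \ell(\mu^{(i-1)})$; in particular the slack sequence $(t_0^{(N)},\dots,t_0^{(1)})$ is weakly decreasing and $(\ell(\mu^{(N)}),\dots,\ell(\mu^{(1)}),\ell(\mu^{(0)}))$ is weakly increasing; (c) $2n\ge Q[i]+2t_0^{(i)}=\ell(\mu^{(i-1)})+t_0^{(i)}$, equivalently $2n-t_0^{(i)}\ge Q[i]+t_0^{(i)}=\ell(\mu^{(i-1)})$; (d) $\mathbf{r}^{(i)}\le_{\mathbf{r}}\mathbf{r}^{(i-1)}$, so that the slack vector sequence satisfies $\mathbf{r}^{(N)}\le_{\mathbf{r}}\cdots\le_{\mathbf{r}}\mathbf{r}^{(1)}$; (e) $\mathbf{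r}^{(i)}\subseteq[1,\ell(\mu^{(i)})]\subseteq[1,\ell(\mu^{(i-1)})]\subseteq[1,2n-t_0^{(i)}]$.
   Context: Partitions $\gamma=(\gamma_1\ge\gamma_2\ge\cdots)$ are identified with Young diagrams (cells $(i,j)$, $1\le i\le\ell(\gamma)$, $1\le j\le\gamma_i$, matrix coordinates); $\ell(\gamma)$ is the number of nonzero parts. For $\alpha\subseteq\gamma$, $\gamma/\alpha$ is a vertical strip if it has at most one cell in each row. A partition $\nu$ is even if $\nu_{2i-1}=\nu_{2i}$ for all $i\ge1$. A semistandard tableau $T$ of skew shape $\lambda/\mu$ with entries in $[1,2n]$ is a filling of the cells of $\lambda/\mu$ weakly increasing along rows and strictly increasing down columns; set $T(a,b)=0$ for cells of $\mu$ and $T(a,b)=\infty$ for $(a,b)\notin\lambda$. Its weight is $(T[1],\dots,T[2n])$, $T[k]$ = number of entries equal to $k$. Its reverse column word is obtained by reading the columns from right to left, each column from top to bottom. A word is Yamanouchi if the weight of each of its prefixes is a partition. $T$ is a Littlewood–Richardson–Sundaram tableau if (1) its reverse column word is Yamanouchi, (2) its weight $\nu=(T[1],\dots,T[2n])$ is an even partition, and (3) $T(n+i,1)\ge 2i$ for every $i\ge0$. For such $T$ with weight $\nu$, let $N=\nu_1$. For $1\le k\le N$ let $J_k$ be the set of cells of $T$ containing the $k$-th occurrence (in the reverse column word) of some letter $j$ with $\nu_j\ge k$. Define $Q=\lozenge(T)$ as the filling of $\lambda/\mu$ with $Q(c)=k$ for $c\in J_k$. The set $Rec_{2n}(\lambda/\mu)$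 is the set of all such $Q$ as $T$ ranges over Littlewood–Richardson–Sundaram tableaux of shape $\lambda/\mu$. For $Q\in Rec_{2n}(\lambda/\mu)$, $Q[k]$ denotes the number of entries equal to $k$, $N$ its largest entry, and $\mu^{(k)}$ (for $0\le k\le N$) the partition whose diagram is $D(\mu)\cup\{c\in\lambda/\mu: Q(c)\ge k+1\}$; so $\mu^{(0)}=\lambda$, $\mu^{(N)}=\mu$, and $\mu^{(k-1)}/\mu^{(k)}$ is a vertical strip with $Q[k]$ cells, where $Q[k]\ge2$ is even and $(Q[1],\dots,Q[N])$ is the conjugate of an even partition. Slack data: for $1\le i\le N$, let $l_0^{(i)}$ be the number of cells of the strip $\mu^{(i-1)}/\mu^{(i)}$ lying in rows $1,\dots,\ell(\mu^{(i)})$; the slack is $t_0^{(i)}=\ell(\mu^{(i)})-l_0^{(i)}$, and the slack vector $\mathbf{r}^{(i)}=(r_1<\dots<r_{t_0^{(i)}})$ is the increasingly ordered set of row indices in $[1,\ell(\mu^{(i)})]$ containing no cell of $\mu^{(i-1)}/\mu^{(i)}$ (written $()$ when $t_0^{(i)}=0$). For $x\in\mathbb{Z}_{\ge0}^p$, $y\in\mathbb{Z}_{\ge0}^q$, write $x\le_{\mathbf{r}}y$ to mean $p\ge q\ge0$ and $x_j\le y_j$ whenever $y_j>0$ (in particular $x\le_{\mathbf{r}}()$ always). $[a,b]=\{a,a+1,\dots,b\}$. *)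

(* Defs.v *)
(* Partitions are seq nat (weakly decreasing, positive parts);
   cells are pairs (row, column), 1-indexed (matrix coordinates). *)
From mathcomp Require Import all_boot all_order all_algebra.
Set Implicit Arguments. Unset Strict Implicit. Unset Printing Implicit Defensive.
Import GRing.Theory Num.Theory.

Definition cell := (nat * nat)%type.

Definition is_partition (g : seq nat) : bool :=
  sorted geq g && all (fun x => 0 < x) g.

(* gamma_i, 1-indexed, 0 beyond the length *)
Definition part (g : seq nat) (i : nat) : nat := nth 0 g i.-1.

Definition subpart (a g : seq nat) : Prop := forall i, part a i <= part g i.

Definition in_diag (g : seq nat) (c : cell) : bool :=
  [&& 1 <= c.1, 1 <= c.2 & c.2 <= part g c.1].

Definition diag_cells (g : seq nat) : seq cell :=
  flatten [seq [seq (a, b) | b <- iota 1 (part g a)] | a <- iota 1 (size g)].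

Definition in_skew (lam mu : seq nat) (c : cell) : bool :=
  in_diag lam c && ~~ in_diag mu c.

Definition rcw_cells (lam mu : seq nat) : seq cell :=
  flatten [seq [seq (a, b) | a <- iota 1 (size lam) & in_skew lam mu (a, b)]
          | b <- rev (iota 1 (part lam 1))].

Definition filling := nat -> nat -> nat.

Definition tab (T : filling) (c : cell) : nat := T c.1 c.2.

Definition ssyt (n : nat) (lam mu : seq nat) (T : filling) : Prop :=
  [/\ forall c, in_skew lam mu c -> 1 <= tab T c <= 2 * n,
      forall a b, in_skew lam mu (a, b) -> in_skew lam mu (a, b.+1) ->
        T a b <= T a b.+1
    & forall a b, in_skew lam mu (a, b) -> in_skew lam mu (a.+1, b) ->
        T a b < T a.+1 b].

(* value of T with conventions: 0 on mu, infinity (None) outside lam *)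
Definition ext_val (lam mu : seq nat) (T : filling) (c : cell) : option nat :=
  if in_diag mu c then Some 0
  else if in_diag lam c then Some (tab T c) else None.

Definition rcw (lam mu : seq nat) (T : filling) : seq nat :=
  map (tab T) (rcw_cells lam mu).

Definition yamanouchi (w : seq nat) : Prop :=
  forall m k, 1 <= k -> count_mem k.+1 (take m w) <= count_mem k (take m w).

Definition wt (lam mu : seq nat) (T : filling) (k : nat) : nat :=
  count_mem k (rcw lam mu T).

Definition even_partition_weight (n : nat) (lam mu : seq nat) (T : filling) : Prop :=
  (forall k, 1 <= k < 2 * n -> wt lam mu T k.+1 <= wt lam mu T k) /\
  (forall i, 1 <= i <= n -> wt lam mu T (2 * i).-1 = wt lam mu T (2 * i)).

Definition lrs (n : nat) (lam mu : seq nat) (T : filling) : Prop :=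
  [/\ ssyt n lam mu T,
      yamanouchi (rcw lam mu T),
      even_partition_weight n lam mu T
    & forall i, match ext_val lam mu T (n + i, 1) with
                | Some v => 2 * i <= v
                | None => true
                end].

Definition occ (lam mu : seq nat) (T : filling) (c : cell) : nat :=
  count_mem (tab T c) (take (index c (rcw_cells lam mu)).+1 (rcw lam mu T)).

Definition inJ (lam mu : seq nat) (T : filling) (k : nat) (c : cell) : bool :=
  [&& in_skew lam mu c, k <= wt lam mu T (tab T c) & occ lam mu T c == k].

Definition is_diamond (lam mu : seq nat) (T Q : filling) : Prop :=
  forall c k, 1 <= k <= wt lam mu T 1 -> inJ lam mu T k c -> tab Q c = k.

Definition in_Rec (n : nat) (lam mu : seq nat) (Q : filling) : Prop :=
  exists T, lrs n lam mu T /\ is_diamond lam mu T Q.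

Definition Qcnt (lam mu : seq nat) (Q : filling) (k : nat) : nat :=
  count (fun c => in_skew lam mu c && (tab Q c == k)) (diag_cells lam).

Definition QN (lam mu : seq nat) (Q : filling) : nat :=
  \max_(c <- diag_cells lam | in_skew lam mu c) tab Q c.

(* diagram of mu^(k) = D(mu) ∪ {c in lam/mu : Q(c) >= k+1} *)
Definition mu_diag (lam mu : seq nat) (Q : filling) (k : nat) (c : cell) : bool :=
  in_diag mu c || (in_skew lam mu c && (k.+1 <= tab Q c)).

Definition ell_mu (lam mu : seq nat) (Q : filling) (k : nat) : nat :=
  \max_(c <- diag_cells lam | mu_diag lam mu Q k c) c.1.

Definition strip (lam mu : seq nat) (Q : filling) (i : nat) (c : cell) : bool :=
  mu_diag lam mu Q i.-1 c && ~~ mu_diag lam mu Q i c.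

Definition l0 (lam mu : seq nat) (Q : filling) (i : nat) : nat :=
  count (fun c => strip lam mu Q i c && (c.1 <= ell_mu lam mu Q i))
        (diag_cells lam).

Definition t0 (lam mu : seq nat) (Q : filling) (i : nat) : int :=
  if i == 0 then 0%R
  else ((ell_mu lam mu Q i)%:Z - (l0 lam mu Q i)%:Z)%R.

Definition rvec (lam mu : seq nat) (Q : filling) (i : nat) : seq nat :=
  if i == 0 then [::]
  else [seq a <- iota 1 (ell_mu lam mu Q i)
         | ~~ has (fun c => strip lam mu Q i c && (c.1 == a)) (diag_cells lam)].

Definition le_r (x y : seq nat) : Prop :=
  size y <= size x /\
  forall j, j < size y -> 0 < nth 0 y j -> nth 0 x j <= nth 0 y j.

(* Main.v *)
Require Import Defs.
From mathcomp Require Import all_boot all_order all_algebra zify.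
Import GRing.Theory Num.Theory.
Set Implicit Arguments. Unset Strict Implicit. Unset Printing Implicit Defensive.

Lemma count_take_mono (T : Type) (P : pred T) (s : seq T) p q :
  p <= q -> count P (take p s) <= count P (take q s).
Proof.
move=> pq; rewrite -(subnKC pq) takeD count_cat; exact: leq_addr.
Qed.

Lemma count_take_S (T : Type) (x0 : T) (P : pred T) (s : seq T) p :
  p < size s -> count P (take p.+1 s) = count P (take p s) + P (nth x0 s p).
Proof.
by move=> ps; rewrite (take_nth x0 ps) -cats1 count_cat /= addn0.
Qed.

Lemma yam_gen w m x y : yamanouchi w -> 1 <= x <= y ->
  count_mem y (take m w) <= count_mem x (take m w).
Proof.
move=> Y /andP[x1 xy]; rewrite -(subnKC xy).
elim: (y - x) => [|d IH]; first by rewrite addn0.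
apply: leq_trans _ IH; rewrite addnS; apply: Y; lia.
Qed.

Lemma exists_occ (w : seq nat) x k : 1 <= k <= count_mem x w ->
  exists2 p, p < size w & (nth 0 w p = x) /\ count_mem x (take p.+1 w) = k.
Proof.
elim/last_ind: w k => [|w y IH] k; first by rewrite /=; lia.
rewrite -cats1 count_cat /= addn0 => /andP[k1 kc].
case: (leqP k (count_mem x w)) => hk.
- have [p ps [h1 h2]] := IH k (introT andP (conj k1 hk)).
  exists p; first by rewrite size_cat /=; lia.
  by rewrite nth_cat ps takel_cat.
- have ey : (y == x) by move: kc hk; case: (y == x) => /=; lia.
  exists (size w); first by rewrite size_cat /= addn1.
  rewrite nth_cat ltnn subnn /= (eqP ey); split => //.
  rewrite take_oversize; last by rewrite size_cat /= addn1.
  rewrite count_cat /= eqxx addn0; move: kc; rewrite ey /nat_of_bool; move=> kc; by apply/eqP; rewrite eqn_leq kc addn1 hk.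
Qed.

Lemma uniq_flatten_key (T K : eqType) (kappa : T -> K) (f : K -> seq T) (s : seq K) :
  uniq s -> (forall x, x \in s -> uniq (f x) /\ forall y, y \in f x -> kappa y = x) ->
  uniq (flatten (map f s)).
Proof.
elim: s => //= x s IH /andP[xs us] H.
rewrite cat_uniq IH ?andbT //; last by move=> z zs; apply: H; rewrite inE zs orbT.
have [ux kx] := H x (mem_head _ _).
rewrite ux /=; apply/hasPn => y /flatten_mapP[z zs yz]; apply/negP => yfx.
have zs' : z \in x :: s by rewrite inE zs orbT.
have [_ kz] := H z zs'.
have e1 := kx y yfx; have e2 := kz y yz.
by move: xs; rewrite -e1 e2 zs.
Qed.

Lemma count_key (T : eqType) (kappa : T -> nat) (P : pred T) (L : seq T) s :
  uniq L -> (forall c d, c \in L -> d \in L -> P c -> P d -> kappa c = kappa d -> c = d) ->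
  (forall c, c \in L -> P c -> 1 <= kappa c) ->
  count (fun c => P c && (kappa c <= s)) L =
  count (fun a => has (fun c => P c && (kappa c == a)) L) (iota 1 s).
Proof.
move=> uL inj pos; elim: s => [|s IH].
  rewrite /= (eq_in_count (a2 := pred0)) ?count_pred0 // => c cL /=.
  by case Pc: (P c) => //=; have := pos c cL Pc; lia.
have -> : iota 1 s.+1 = iota 1 s ++ [:: s.+1] by rewrite -[s.+1]addn1 iotaD /= addnC.
rewrite count_cat /= addn0 -IH.
have -> : count (fun c => P c && (kappa c <= s.+1)) L =
  count (fun c => P c && (kappa c <= s)) L + count (fun c => P c && (kappa c == s.+1)) L.
  rewrite -count_predUI (eq_count (a2 := pred0) (a1 := predI _ _)); last first.
    move=> c /=; case: (P c) => //=; apply/negbTE/negP => /andP[h1 /eqP h2]; lia.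
  rewrite count_pred0 addn0; apply: eq_count => c /=.
  by case: (P c) => //=; rewrite leq_eqVlt ltnS orbC.
congr (_ + _).
case: (boolP (has _ _)) => [/hasP[c cL /andP[Pc kc]]|/hasPn hn] /=; last first.
  by apply/eqP; rewrite -leqn0 leqNgt -has_count; apply/hasPn.
apply/eqP; rewrite eqn_leq -has_count; apply/andP; split; last first.
  by apply/hasP; exists c; [|rewrite /= Pc kc].
rewrite -size_filter.
apply: (leq_trans (n := size [:: c])) => //.
apply: uniq_leq_size; first exact: filter_uniq.
move=> d; rewrite mem_filter => /andP[/andP[Pd kd] dL]; rewrite inE; apply/eqP.
by apply: inj => //; rewrite (eqP kc) (eqP kd).
Qed.
Lemma part_mono g i j : is_partition g -> 1 <= i <= j -> part g j <= part g i.
Proof.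
move=> /andP[sg _] /andP[i1 ij]; rewrite /part.
case: (ltnP j.-1 (size g)) => hj; last by rewrite nth_default.
have := @sorted_leq_nth _ geq (fun y x z h1 h2 => leq_trans h2 h1) (fun a => leqnn a) 0 g sg i.-1 j.-1.
rewrite !inE => H; apply: H => //; lia.
Qed.

Lemma part_pos g i : is_partition g -> 1 <= i <= size g -> 0 < part g i.
Proof.
move=> /andP[_ ag] /andP[i1 isz]; rewrite /part.
by apply: (allP ag); apply: mem_nth; rewrite prednK.
Qed.

Lemma part_big g i : size g < i -> part g i = 0.
Proof. by move=> h; rewrite /part nth_default //; lia. Qed.

Lemma in_diag_row g c : in_diag g c -> 1 <= c.1 <= size g.
Proof.
case: c => a b /andP[a1 /andP[b1 bp]] /=; rewrite a1 /=.
case: (leqP a (size g)) => // h; move: bp; rewrite part_big //; lia.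
Qed.

Lemma mem_diag g c : (c \in diag_cells g) = in_diag g c.
Proof.
apply/idP/idP.
  move=> /flatten_mapP[a]; rewrite mem_iota => /andP[a1 _] /mapP[b]; rewrite mem_iota => /andP[b1 bp] ->.
  rewrite /in_diag /= a1 b1 /=; lia.
move=> cd; have /andP[c1 cs] := in_diag_row cd.
case: c cd c1 cs => a b /andP[_ /andP[b1 bp]] /= a1 asz.
apply/flatten_mapP; exists a; first by rewrite mem_iota; lia.
by apply/mapP; exists b => //; rewrite mem_iota; simpl in *; lia.
Qed.

Lemma uniq_diag g : uniq (diag_cells g).
Proof.
apply: (uniq_flatten_key (kappa := fst)); first exact: iota_uniq.
move=> a _; split; last by move=> y /mapP[b _ ->].
rewrite map_inj_uniq ?iota_uniq //; by move=> x y [] ->.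
Qed.

Definition ro (d e : cell) : bool := (e.2 < d.2) || ((d.2 == e.2) && (d.1 < e.1)).

Lemma mem_rcw lam mu c : is_partition lam ->
  (c \in rcw_cells lam mu) = in_skew lam mu c.
Proof.
move=> plam; apply/idP/idP.
  by move=> /flatten_mapP[b _] /mapP[a]; rewrite mem_filter => /andP[h _] ->.
move=> cs; have /andP[cd _] := cs; have /andP[c1 csz] := in_diag_row cd.
case: c cs cd c1 csz => a b cs /andP[_ /andP[b1 bp]] /= a1 asz.
apply/flatten_mapP; exists b.
  have h : part lam a <= part lam 1 by apply: part_mono => //; rewrite leqnn a1.
  rewrite mem_rev mem_iota; simpl in *; lia.
by apply/mapP; exists a => //; rewrite mem_filter cs mem_iota; simpl in *; lia.
Qed.

Lemma pairwise_rcw lam mu : pairwise ro (rcw_cells lam mu).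
Proof.
rewrite /rcw_cells.
have : pairwise (fun x y => y < x) (rev (iota 1 (part lam 1))).
  rewrite -sorted_pairwise; last by move=> a b c h1 h2; apply: ltn_trans h2 h1.
  by rewrite rev_sorted; apply: iota_ltn_sorted.
elim: (rev _) => //= b bs IH /andP[hb pbs].
rewrite pairwise_cat IH // andbT; apply/andP; split.
  apply/allrelP => x y /mapP[a _ ->] /flatten_mapP[b' b'bs] /mapP[a' _ ->].
  by rewrite /ro /= (allP hb).
rewrite pairwise_map; apply: pairwise_filter.
have : pairwise ltn (iota 1 (size lam)).
  by rewrite -sorted_pairwise; [apply: iota_ltn_sorted | apply: ltn_trans].
by apply: sub_pairwise => x y /=; rewrite /ro /= ltnn eqxx.
Qed.

Lemma uniq_rcw lam mu : uniq (rcw_cells lam mu).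
Proof.
apply: (pairwise_uniq (r := ro)); last exact: pairwise_rcw.
by move=> c; rewrite /ro ltnn eqxx ltnn.
Qed.

Lemma ro_index lam mu c d : c \in rcw_cells lam mu -> d \in rcw_cells lam mu ->
  (index c (rcw_cells lam mu) < index d (rcw_cells lam mu)) = ro c d.
Proof.
move=> cs ds; set s := rcw_cells lam mu.
have P := pairwise_rcw lam mu; have U := uniq_rcw lam mu.
have H : forall x y, x \in s -> y \in s -> index x s < index y s -> ro x y.
  move=> x y xs ys lt; move/(pairwiseP (0,0)): P => P.
  have := P (index x s) (index y s); rewrite !inE !index_mem !nth_index //; apply => //.
apply/idP/idP; first exact: H.
move=> r; case: (ltngtP (index c s) (index d s)) => // h.
  have := H d c ds cs h; move: r; rewrite /ro; case: c {cs h} => a b; case: d {ds} => a' b' /=.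
  case: (ltngtP b b') => //= _; rewrite ?eqxx //=; lia.
have e : c = d by rewrite -(nth_index (0,0) cs) h nth_index.
by move: r; rewrite e /ro ltnn eqxx ltnn.
Qed.
Lemma skew_row lam mu a b b' k : in_skew lam mu (a,b) -> in_skew lam mu (a,b') ->
  b <= k <= b' -> in_skew lam mu (a,k).
Proof.
rewrite /in_skew /in_diag /= => /andP[/and3P[a1 b1 _] nm] /andP[/and3P[_ _ bp] _] /andP[bk kb].
rewrite a1 /=; apply/andP; split; first by apply/andP; split; lia.
apply: contra nm => /andP[_ h]; rewrite a1 b1 /=; lia.
Qed.

Lemma skew_col lam mu a a' b k : is_partition lam -> is_partition mu ->
  in_skew lam mu (a,b) -> in_skew lam mu (a',b) ->
  a <= k <= a' -> in_skew lam mu (k,b).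
Proof.
move=> pl pm; rewrite /in_skew /in_diag /= => /andP[/and3P[a1 b1 _] nm] /andP[/and3P[_ _ bp] _] /andP[ak ka].
have h1 : part lam a' <= part lam k by apply: part_mono => //; apply/andP; split; lia.
have h2 : part mu k <= part mu a by apply: part_mono => //; apply/andP; split; lia.
rewrite b1 /=; apply/andP; split; first by apply/andP; split; lia.
apply: contra nm => /andP[_ h]; rewrite a1 b1 /=; lia.
Qed.

Lemma row_mono n lam mu T a b d : ssyt n lam mu T ->
  in_skew lam mu (a,b) -> in_skew lam mu (a,b+d) -> T a b <= T a (b+d).
Proof.
case=> _ hr _ s1; elim: d => [|d IH] s2; first by rewrite addn0.
have s3 : in_skew lam mu (a, b+d) by apply: (skew_row s1 s2); lia.
apply: leq_trans (IH s3) _; rewrite addnS; by apply: hr => //; rewrite -addnS.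
Qed.

Lemma row_mono' n lam mu T a b b' : ssyt n lam mu T ->
  in_skew lam mu (a,b) -> in_skew lam mu (a,b') -> b <= b' -> T a b <= T a b'.
Proof. by move=> ss s1 s2 h; have := row_mono (d := b' - b) ss s1; rewrite subnKC //; apply. Qed.

Lemma col_mono n lam mu T a b d : is_partition lam -> is_partition mu -> ssyt n lam mu T ->
  in_skew lam mu (a,b) -> in_skew lam mu (a+d.+1,b) -> T a b < T (a+d.+1) b.
Proof.
move=> pl pm [_ _ hc] s1; elim: d => [|d IH] s2; first by rewrite addn1; apply: hc => //; rewrite -addn1.
have s3 : in_skew lam mu (a+d.+1, b) by apply: (skew_col pl pm s1 s2); apply/andP; split; lia.
apply: ltn_trans (IH s3) _; rewrite (addnS a d.+1); by apply: hc => //; rewrite -addnS.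
Qed.

Lemma col_mono' n lam mu T a a' b : is_partition lam -> is_partition mu -> ssyt n lam mu T ->
  in_skew lam mu (a,b) -> in_skew lam mu (a',b) -> a < a' -> T a b < T a' b.
Proof.
move=> pl pm ss s1 s2 h; have e : a' = a + (a' - a).-1.+1 by lia.
by have := col_mono (d := (a' - a).-1) pl pm ss s1; rewrite -e; apply.
Qed.

Lemma size_rcw lam mu T : size (rcw lam mu T) = size (rcw_cells lam mu).
Proof. by rewrite size_map. Qed.

Lemma nth_rcw lam mu T p : p < size (rcw_cells lam mu) ->
  nth 0 (rcw lam mu T) p = tab T (nth (0,0) (rcw_cells lam mu) p).
Proof. by move=> h; rewrite (nth_map (0,0)). Qed.

Lemma nth_rcw_index lam mu T c : c \in rcw_cells lam mu ->
  nth 0 (rcw lam mu T) (index c (rcw_cells lam mu)) = tab T c.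
Proof. by move=> h; rewrite nth_rcw ?index_mem // nth_index. Qed.

Lemma occ_bounds lam mu T c : c \in rcw_cells lam mu ->
  1 <= occ lam mu T c <= wt lam mu T (tab T c).
Proof.
move=> cs; rewrite /occ /wt; apply/andP; split.
  rewrite (count_take_S 0) ?size_rcw ?index_mem // nth_rcw_index //= eqxx; lia.
rewrite -{2}(cat_take_drop (index c (rcw_cells lam mu)).+1 (rcw lam mu T)) count_cat.
exact: leq_addr.
Qed.

Lemma wt_mono n lam mu T x y : even_partition_weight n lam mu T ->
  1 <= y -> y <= x -> x <= 2 * n -> wt lam mu T x <= wt lam mu T y.
Proof.
case=> hw _ y1 yx x2; rewrite -(subnKC yx).
have : y + (x - y) <= 2 * n by rewrite subnKC.
elim: (x - y) => [|d IH] h; first by rewrite addn0.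
apply: leq_trans (IH _) ; last by lia.
rewrite addnS; apply: hw; lia.
Qed.

Lemma Q_occ n lam mu T Q c : is_partition lam -> lrs n lam mu T -> is_diamond lam mu T Q ->
  in_skew lam mu c -> tab Q c = occ lam mu T c.
Proof.
move=> pl [ss _ ew _] dm sc; have cs : c \in rcw_cells lam mu by rewrite mem_rcw.
have /andP[o1 o2] := occ_bounds T cs.
have [h1 _ _] := ss; have /andP[t1 t2] := h1 c sc.
apply: dm; last by rewrite /inJ sc o2 eqxx.
rewrite o1 /=; apply: leq_trans o2 _; exact: (wt_mono ew).
Qed.

Lemma occ_row n lam mu T a b b' : is_partition lam -> ssyt n lam mu T ->
  yamanouchi (rcw lam mu T) ->
  in_skew lam mu (a,b) -> in_skew lam mu (a,b') -> b < b' ->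
  occ lam mu T (a,b') < occ lam mu T (a,b).
Proof.
move=> pl ss Y s1 s2 bb.
have c1 : (a,b) \in rcw_cells lam mu by rewrite mem_rcw.
have c2 : (a,b') \in rcw_cells lam mu by rewrite mem_rcw.
have lt : index (a,b') (rcw_cells lam mu) < index (a,b) (rcw_cells lam mu).
  by rewrite ro_index // /ro /= bb.
have [h1 _ _] := ss; have /andP[x1 _] := h1 _ s1.
have xy : T a b <= T a b' by apply: row_mono' ss s1 s2 (ltnW bb).
rewrite /occ /=.
apply: leq_ltn_trans (yam_gen _ Y (introT andP (conj x1 xy))) _.
apply: leq_ltn_trans (count_take_mono _ _ lt) _.
rewrite (count_take_S 0) ?size_rcw ?index_mem // nth_rcw_index //= eqxx addn1; exact: ltnSn.
Qed.

Lemma occ_col n lam mu T a b : is_partition lam -> is_partition mu -> ssyt n lam mu T ->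
  yamanouchi (rcw lam mu T) ->
  in_skew lam mu (a,b) -> in_skew lam mu (a.+1,b) ->
  occ lam mu T (a.+1,b) <= occ lam mu T (a,b).
Proof.
move=> pl pm ss Y s1 s2.
have c1 : (a,b) \in (rcw_cells lam mu) by rewrite mem_rcw.
have c2 : (a.+1,b) \in (rcw_cells lam mu) by rewrite mem_rcw.
have lt : index (a,b) (rcw_cells lam mu) < index (a.+1,b) (rcw_cells lam mu) by rewrite ro_index // /ro /= ltnn eqxx ltnSn.
have e : index (a.+1,b) (rcw_cells lam mu) = (index (a,b) (rcw_cells lam mu)).+1.
  apply/eqP; rewrite eqn_leq lt andbT leqNgt; apply/negP => h.
  set p := (index (a,b) (rcw_cells lam mu)).+1.
  have ps : p < size (rcw_cells lam mu) by apply: ltn_trans h _; rewrite index_mem.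
  have es : nth (0,0) (rcw_cells lam mu) p \in (rcw_cells lam mu) by apply: mem_nth.
  have i1 : index (nth (0,0) (rcw_cells lam mu) p) (rcw_cells lam mu) = p by rewrite index_uniq // uniq_rcw.
  have r1 : ro (a,b) (nth (0,0) (rcw_cells lam mu) p) by rewrite -(@ro_index lam mu) // i1.
  have r2 : ro (nth (0,0) (rcw_cells lam mu) p) (a.+1,b) by rewrite -(@ro_index lam mu) // i1.
  move: r1 r2; rewrite /ro /=; case: (nth _ _ _) => a' b' /=.
  case: (ltngtP b' b) => //= _; rewrite ?eqxx //=; lia.
have [h1 _ _] := ss; have /andP[x1 _] := h1 _ s1.
have xy : T a b < T a.+1 b by have := col_mono (d := 0) pl pm ss s1; rewrite addn1; apply.
rewrite /occ /=.
apply: leq_trans (yam_gen _ Y (introT andP (conj x1 (ltnW xy)))) _.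
have ip : index (a.+1,b) (rcw_cells lam mu) < size (rcw lam mu T) by rewrite size_rcw index_mem.
rewrite (count_take_S 0 _ ip) (nth_rcw_index T c2) /= e.
by rewrite eq_sym (ltn_eqF xy) addn0.
Qed.

Lemma occ_inj lam mu T c d : c \in rcw_cells lam mu -> d \in rcw_cells lam mu ->
  tab T c = tab T d -> occ lam mu T c = occ lam mu T d -> c = d.
Proof.
have key : forall c d, c \in rcw_cells lam mu -> d \in rcw_cells lam mu ->
  tab T c = tab T d -> index c (rcw_cells lam mu) < index d (rcw_cells lam mu) ->
  occ lam mu T c < occ lam mu T d.
  move=> x y xs ys e lt; rewrite /occ e.
  apply: leq_ltn_trans (count_take_mono _ _ lt) _.
  rewrite (count_take_S 0) ?size_rcw ?index_mem // nth_rcw_index //= eqxx addn1; exact: ltnSn.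
move=> cs ds e o; case: (ltngtP (index c (rcw_cells lam mu)) (index d (rcw_cells lam mu))) => h.
- by have := key _ _ cs ds e h; rewrite o ltnn.
- by have := key _ _ ds cs (esym e) h; rewrite o ltnn.
- by rewrite -(nth_index (0,0) cs) h nth_index.
Qed.

Lemma occ_exists lam mu T x k : is_partition lam -> 1 <= k <= wt lam mu T x ->
  exists2 c, in_skew lam mu c & tab T c = x /\ occ lam mu T c = k.
Proof.
move=> pl h; have [p ps [h1 h2]] := exists_occ h.
have ps' : p < size (rcw_cells lam mu) by rewrite -(size_rcw _ _ T).
exists (nth (0,0) (rcw_cells lam mu) p); first by rewrite -mem_rcw // mem_nth.
rewrite -(nth_rcw T ps') h1; split => //.
by rewrite /occ index_uniq ?uniq_rcw // -(nth_rcw T ps') h1.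
Qed.
Definition Hyp n lam mu T Q :=
  [/\ is_partition lam, is_partition mu, lrs n lam mu T, is_diamond lam mu T Q & subpart mu lam].

Lemma Hyp_ssyt n lam mu T Q : Hyp n lam mu T Q -> ssyt n lam mu T.
Proof. by case=> _ _ []. Qed.
Lemma Hyp_yam n lam mu T Q : Hyp n lam mu T Q -> yamanouchi (rcw lam mu T).
Proof. by case=> _ _ []. Qed.
Lemma Hyp_Q n lam mu T Q c : Hyp n lam mu T Q -> in_skew lam mu c -> tab Q c = occ lam mu T c.
Proof. by case=> pl _ L D _ sk; apply: (Q_occ pl L D sk). Qed.

Lemma mu_in_lam n lam mu T Q c : Hyp n lam mu T Q -> in_diag mu c -> in_diag lam c.
Proof.
case=> _ _ _ _ sm; case: c => a b /and3P[a1 b1 bp]; rewrite /in_diag a1 b1 /=.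
exact: leq_trans bp (sm a).
Qed.

Lemma U1 n lam mu T Q k a b b' : Hyp n lam mu T Q ->
  in_diag lam (a,b) -> mu_diag lam mu Q k (a,b) -> 1 <= b' <= b -> mu_diag lam mu Q k (a,b').
Proof.
move=> H dl; rewrite /mu_diag => /orP[dm|/andP[sk kq]] /andP[b1 bb].
  by move: dm; rewrite /in_diag /= => /and3P[a1 _ bp]; rewrite a1 b1 /= (leq_trans bb bp).
case: (boolP (in_diag mu (a,b'))) => //= nm.
have sk' : in_skew lam mu (a,b').
  rewrite /in_skew nm andbT; move: dl; rewrite /in_diag /= => /and3P[a1 _ bp].
  by rewrite a1 b1 /=; apply: leq_trans bb bp.
rewrite sk' /=; apply: leq_trans kq _; rewrite !(Hyp_Q H) //.
move: bb; rewrite leq_eqVlt => /orP[/eqP->//|lt].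
have [pl _ _ _ _] := H.
by apply: ltnW; apply: occ_row pl (Hyp_ssyt H) (Hyp_yam H) sk' sk lt.
Qed.

Lemma U2 n lam mu T Q k a b : Hyp n lam mu T Q -> 1 <= a ->
  in_diag lam (a.+1,b) -> mu_diag lam mu Q k (a.+1,b) ->
  in_diag lam (a,b) && mu_diag lam mu Q k (a,b).
Proof.
move=> H a1 dl; have [pl pm _ _ _] := H.
have dl' : in_diag lam (a,b).
  move: dl; rewrite /in_diag /= => /andP[b1 bp]; rewrite a1 b1 /=.
  by apply: leq_trans bp _; apply: part_mono => //; rewrite a1 /=.
rewrite dl' /=; rewrite /mu_diag => /orP[dm|/andP[sk kq]].
  move: dm; rewrite /in_diag /= => /andP[b1 bp]; rewrite a1 b1 /=.
  have pm' : part mu a.+1 <= part mu a by apply: part_mono => //; rewrite a1 /=.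
  by rewrite (leq_trans bp pm').
case: (boolP (in_diag mu (a,b))) => //= nm.
have sk' : in_skew lam mu (a,b) by rewrite /in_skew nm dl'.
rewrite sk' /=; apply: leq_trans kq _; rewrite !(Hyp_Q H) //.
exact: occ_col pl pm (Hyp_ssyt H) (Hyp_yam H) sk' sk.
Qed.

Lemma U3 n lam mu T Q k c r : Hyp n lam mu T Q ->
  in_diag lam c -> mu_diag lam mu Q k c -> 1 <= r <= c.1 ->
  in_diag lam (r,1) && mu_diag lam mu Q k (r,1).
Proof.
case: c => L b H dl dm /= /andP[r1 rL].
have b1 : 1 <= b by move: dl => /and3P[].
have d1 : in_diag lam (L,1).
  by move: dl; rewrite /in_diag /= => /and3P[-> _ bp] /=; apply: leq_trans b1 bp.
have m1 : mu_diag lam mu Q k (L,1) by apply: (U1 H dl dm); rewrite leqnn b1.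
have : forall d, d <= L - r -> in_diag lam (L - d,1) && mu_diag lam mu Q k (L - d,1).
  elim => [|d IH] hd; first by rewrite subn0 d1 m1.
  have e : L - d = (L - d.+1).+1 by lia.
  apply: (U2 H); first by lia.
    by rewrite -e; case/andP: (IH (ltnW hd)).
  by rewrite -e; case/andP: (IH (ltnW hd)).
by move=> /(_ (L - r) (leqnn _)); rewrite subKn.
Qed.

Definition ell_ lam mu Q k := ell_mu lam mu Q k.

Lemma E1 lam mu Q k c : c \in diag_cells lam -> mu_diag lam mu Q k c -> c.1 <= ell_mu lam mu Q k.
Proof. by move=> cd m; apply: (leq_bigmax_seq c). Qed.

Lemma bigmax_attained (I : eqType) (r : seq I) (P : pred I) (F : I -> nat) :
  0 < \max_(i <- r | P i) F i ->
  exists2 i, i \in r & P i && (F i == \max_(i <- r | P i) F i).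
Proof.
elim: r => [|x r IH]; first by rewrite big_nil.
rewrite big_cons; case: (boolP (P x)) => Px /=; last first.
  by move=> /IH[i ir h]; exists i; rewrite ?inE ?ir ?orbT.
case: (leqP (F x) (\max_(i <- r | P i) F i)) => h.
  move=> /IH[i ir hi]; exists i; rewrite ?inE ?ir ?orbT //.
by move=> _; exists x; rewrite ?mem_head ?Px ?eqxx.
Qed.

Lemma E2 lam mu Q k : 0 < ell_mu lam mu Q k ->
  exists2 c, c \in diag_cells lam & mu_diag lam mu Q k c && (c.1 == ell_mu lam mu Q k).
Proof. exact: bigmax_attained. Qed.

Lemma E3 lam mu Q k : ell_mu lam mu Q k.+1 <= ell_mu lam mu Q k.
Proof.
apply/bigmax_leqP_seq => c cd m; apply: E1 => //.
by move: m; rewrite /mu_diag => /orP[->//|/andP[-> h]]; rewrite /= (ltnW h) orbT.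
Qed.

Lemma S0 n lam mu T Q i c : Hyp n lam mu T Q -> 1 <= i -> c \in diag_cells lam ->
  strip lam mu Q i c = in_skew lam mu c && (occ lam mu T c == i).
Proof.
move=> H i1; rewrite mem_diag => cd; rewrite /strip /mu_diag /in_skew cd /=.
case: (boolP (in_diag mu c)) => //= nm.
have sk : in_skew lam mu c by rewrite /in_skew cd.
rewrite (Hyp_Q H sk); set q := occ lam mu T c; rewrite prednK //.
apply/andP/eqP => [[h1 h2]|->]; last by rewrite ltnn leqnn.
by move: h2; rewrite -leqNgt => h2; apply/eqP; rewrite eqn_leq h1 h2.
Qed.

Lemma S1 n lam mu T Q i c d : Hyp n lam mu T Q -> 1 <= i ->
  c \in diag_cells lam -> d \in diag_cells lam ->
  strip lam mu Q i c -> strip lam mu Q i d -> c.1 = d.1 -> c = d.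
Proof.
move=> H i1 cD dD; rewrite (S0 H i1 cD) (S0 H i1 dD).
have [pl _ _ _ _] := H.
case: c cD => a b cD; case: d dD => a' b' dD /= /andP[s1 /eqP o1] /andP[s2 /eqP o2] e.
move: s2 o2; rewrite -e => s2 o2.
case: (ltngtP b b') => h.
- by have := occ_row pl (Hyp_ssyt H) (Hyp_yam H) s1 s2 h; rewrite o1 o2 ltnn.
- by have := occ_row pl (Hyp_ssyt H) (Hyp_yam H) s2 s1 h; rewrite o1 o2 ltnn.
- by rewrite h.
Qed.

Definition Hrow lam mu Q i a := has (fun c => strip lam mu Q i c && (c.1 == a)) (diag_cells lam).

Lemma A_eq n lam mu T Q i s : Hyp n lam mu T Q -> 1 <= i ->
  count (fun c => strip lam mu Q i c && (c.1 <= s)) (diag_cells lam) =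
  count (Hrow lam mu Q i) (iota 1 s).
Proof.
move=> H i1; apply: count_key; first exact: uniq_diag.
  by move=> c d cD dD; apply: (S1 H i1).
by move=> c; rewrite mem_diag => /in_diag_row /andP[].
Qed.
Lemma E4 n lam mu T Q i c : Hyp n lam mu T Q -> c \in diag_cells lam ->
  strip lam mu Q i c -> c.1 <= ell_mu lam mu Q i.-1.
Proof. by move=> H cD /andP[m _]; apply: E1. Qed.

Lemma strip_below n lam mu T Q i a : Hyp n lam mu T Q -> 1 <= i ->
  ell_mu lam mu Q i < a <= ell_mu lam mu Q i.-1 -> Hrow lam mu Q i a.
Proof.
move=> H i1 /andP[ea aL].
have [c0 c0D /andP[m0 /eqP e0]] := E2 (leq_ltn_trans (leq0n _) (leq_trans ea aL)).
have c0d : in_diag lam c0 by rewrite -mem_diag.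
have ha : 1 <= a <= c0.1 by rewrite e0; apply/andP; split; lia.
have /andP[d1 m1] := U3 H c0d m0 ha.
apply/hasP; exists (a,1); first by rewrite mem_diag.
rewrite /strip m1 /= eqxx andbT.
apply/negP => m2; have := @E1 lam mu Q i (a,1); rewrite mem_diag => /(_ d1).
move=> /(_ m2) /= h; lia.
Qed.

Lemma Qcnt_A n lam mu T Q i : Hyp n lam mu T Q -> 1 <= i ->
  Qcnt lam mu Q i = count (fun c => strip lam mu Q i c && (c.1 <= ell_mu lam mu Q i.-1)) (diag_cells lam).
Proof.
move=> H i1; apply: eq_in_count => c cD /=.
rewrite (S0 H i1 cD); case: (boolP (in_skew lam mu c)) => //= sk.
rewrite (Hyp_Q H sk); case: (boolP (occ lam mu T c == i)) => //= oi.
by apply/esym; apply: (E4 H cD); rewrite (S0 H i1 cD) sk oi.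
Qed.

Lemma A_split n lam mu T Q i t : Hyp n lam mu T Q -> 1 <= i ->
  ell_mu lam mu Q i <= t <= ell_mu lam mu Q i.-1 ->
  count (Hrow lam mu Q i) (iota 1 t) =
  count (Hrow lam mu Q i) (iota 1 (ell_mu lam mu Q i)) + (t - ell_mu lam mu Q i).
Proof.
move=> H i1 /andP[et tL]; set e := ell_mu lam mu Q i.
rewrite -{1}(subnKC et) iotaD count_cat; congr (_ + _).
rewrite (eq_in_count (a2 := predT)) ?count_predT ?size_iota // => a.
rewrite mem_iota => /andP[h1 h2]; apply: (strip_below H i1); apply/andP; split; lia.
Qed.

Lemma core_a n lam mu T Q i : Hyp n lam mu T Q -> 1 <= i ->
  [/\ Qcnt lam mu Q i = l0 lam mu Q i + (ell_mu lam mu Q i.-1 - ell_mu lam mu Q i),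
      l0 lam mu Q i <= ell_mu lam mu Q i
    & ell_mu lam mu Q i <= ell_mu lam mu Q i.-1].
Proof.
move=> H i1; have eL : ell_mu lam mu Q i <= ell_mu lam mu Q i.-1.
  by have := E3 lam mu Q i.-1; rewrite prednK.
have l0e : l0 lam mu Q i = count (Hrow lam mu Q i) (iota 1 (ell_mu lam mu Q i)).
  by rewrite /l0 (A_eq _ H i1).
split => //.
  rewrite (Qcnt_A H i1) (A_eq _ H i1) l0e; apply: (A_split H i1).
  by rewrite eL leqnn.
by rewrite l0e; apply: leq_trans (count_size _ _) _; rewrite size_iota.
Qed.

Lemma letters_bound n lam mu T Q i x : Hyp n lam mu T Q -> 1 <= i -> 1 <= x -> x <= 2 * n ->
  i <= wt lam mu T x -> x <= Qcnt lam mu Q i.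
Proof.
move=> H i1 x1 x2 iw; have [pl pm [ss Y ew _] _ _] := H.
pose P := fun c => in_skew lam mu c && (tab Q c == i).
apply: (@leq_trans (count (fun c => P c && (tab T c <= x)) (diag_cells lam))); last first.
  by apply: sub_count => c /andP[].
rewrite (count_key (kappa := tab T)); first last.
- by move=> c _ /andP[sk _]; have [h1 _ _] := ss; have /andP[] := h1 c sk.
- move=> c d _ _ /andP[sc qc] /andP[sd qd] e.
  apply: (@occ_inj lam mu T); rewrite ?mem_rcw //.
  by rewrite -(Hyp_Q H sc) -(Hyp_Q H sd) (eqP qc) (eqP qd).
- exact: uniq_diag.
rewrite (eq_in_count (a2 := predT)) ?count_predT ?size_iota // => y.
rewrite mem_iota => /andP[y1 yx].
have wy : i <= wt lam mu T y.
  apply: leq_trans iw _; apply: (wt_mono ew) => //; lia.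
have [c sc [tc oc]] := occ_exists pl (introT andP (conj i1 wy)).
apply/hasP; exists c; first by rewrite mem_diag; case/andP: sc.
by rewrite /P sc (Hyp_Q H sc) oc tc !eqxx.
Qed.

Lemma core_c n lam mu T Q i : Hyp n lam mu T Q -> size mu <= n -> 1 <= i ->
  2 * ell_mu lam mu Q i.-1 <= 2 * n + Qcnt lam mu Q i.
Proof.
move=> H smu i1; set L := ell_mu lam mu Q i.-1.
case: (leqP L n) => hL; first lia.
have [pl pm [ss Y ew cond] _ _] := H.
have [c0 c0D /andP[m0 /eqP e0]] := E2 (leq_ltn_trans (leq0n _) hL).
have c0d : in_diag lam c0 by rewrite -mem_diag.
have ha : 1 <= L <= c0.1 by rewrite e0; apply/andP; split; lia.
have /andP[d1 m1] := U3 H c0d m0 ha.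
have nm : ~~ in_diag mu (L,1).
  by rewrite /in_diag /= part_big; [rewrite andbF | lia].
have sk : in_skew lam mu (L,1) by rewrite /in_skew d1 nm.
move: m1; rewrite /mu_diag (negbTE nm) sk /= (Hyp_Q H sk) prednK // => io.
have cs : (L,1) \in rcw_cells lam mu by rewrite mem_rcw.
have /andP[_ ow] := occ_bounds T cs.
have [h1 _ _] := ss; have /andP[x1 x2] := h1 _ sk.
have xb := letters_bound H i1 x1 x2 (leq_trans io ow).
have := cond (L - n); rewrite /ext_val subnKC ?(ltnW hL) // (negbTE nm) d1 /= => hx.
lia.
Qed.

Lemma row_le n lam mu T Q c d : Hyp n lam mu T Q -> in_skew lam mu c -> in_skew lam mu d ->
  tab T c = tab T d -> occ lam mu T d < occ lam mu T c -> d.1 <= c.1.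
Proof.
move=> H sc sd e lt; have [pl pm _ _ _] := H; have ss := Hyp_ssyt H.
have cs : c \in rcw_cells lam mu by rewrite mem_rcw.
have ds : d \in rcw_cells lam mu by rewrite mem_rcw.
have idx : index d (rcw_cells lam mu) < index c (rcw_cells lam mu).
  rewrite ltnNge; apply/negP => h; move: lt; rewrite /occ -e.
  by rewrite ltnNge (count_take_mono _ _ (h : (index c _).+1 <= (index d _).+1)).
move: idx; rewrite ro_index //; case: c sc cs e {lt} => a b sc cs; case: d sd ds => a' b' sd ds /= e.
rewrite /ro /= => /orP[bb|/andP[_ h]]; last exact: ltnW.
rewrite leqNgt; apply/negP => aa.
have sk : in_skew lam mu (a,b').
  move: sc sd; rewrite /in_skew /in_diag /= => /andP[/and3P[a1 b1 _] nm] /andP[/and3P[_ _ bp] nm'].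
  have h1 : part lam a' <= part lam a by apply: part_mono => //; rewrite a1 (ltnW aa).
  rewrite a1 /= (leq_trans (ltnW (leq_ltn_trans b1 bb)) (leqnn _)) (leq_trans bp h1) /=.
  apply: contra nm => h; rewrite a1 b1 /=; exact: leq_trans (ltnW bb) h.
have r1 := row_mono' ss sc sk (ltnW bb).
have r2 := col_mono' pl pm ss sk sd aa.
by move: e; rewrite /tab /= => e; move: r2; rewrite -e ltnNge r1.
Qed.
Lemma A_letters n lam mu T Q k s : Hyp n lam mu T Q -> 1 <= k ->
  count (fun c => strip lam mu Q k c && (c.1 <= s)) (diag_cells lam) =
  count (fun y => has (fun c => (strip lam mu Q k c && (c.1 <= s)) && (tab T c == y)) (diag_cells lam))
        (iota 1 (2 * n)).
Proof.
move=> H k1; have ss := Hyp_ssyt H; have [h1 _ _] := ss.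
rewrite -(count_key (kappa := tab T)); first last.
- move=> c cD /andP[st _]; move: st; rewrite (S0 H k1 cD) => /andP[sk _].
  by have /andP[] := h1 c sk.
- move=> c d cD dD /andP[sc _] /andP[sd _] e; move: sc sd.
  rewrite (S0 H k1 cD) (S0 H k1 dD) => /andP[sc /eqP oc] /andP[sd /eqP od].
  have [pl _ _ _ _] := H; by apply: (@occ_inj lam mu T); rewrite ?mem_rcw ?oc ?od.
- exact: uniq_diag.
apply: eq_in_count => c cD /=.
case: (boolP (strip lam mu Q k c)) => //= st; case: (c.1 <= s) => //=.
move: st; rewrite (S0 H k1 cD) => /andP[sk _].
by have /andP[] := h1 c sk.
Qed.

Lemma core_d n lam mu T Q i s : Hyp n lam mu T Q -> 2 <= i ->
  count (Hrow lam mu Q i) (iota 1 s) <= count (Hrow lam mu Q i.-1) (iota 1 s).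
Proof.
move=> H i2; have i1 : 1 <= i by lia. have i1' : 1 <= i.-1 by lia.
have [pl _ _ _ _] := H.
rewrite -(A_eq _ H i1) -(A_eq _ H i1') (A_letters _ H i1) (A_letters _ H i1').
apply: sub_count => y /hasP[c cD /andP[/andP[st cs] /eqP ty]].
move: (st); rewrite (S0 H i1 cD) => /andP[sc /eqP oc].
have crc : c \in rcw_cells lam mu by rewrite mem_rcw.
have /andP[_ ow] := occ_bounds T crc.
have hk : 1 <= i.-1 <= wt lam mu T y by rewrite i1' -ty (leq_trans _ ow) // oc leq_pred.
have [d sd [td od]] := occ_exists pl hk.
have dD : d \in diag_cells lam by rewrite mem_diag; case/andP: sd.
have rl : d.1 <= c.1.
  apply: (row_le H sc sd); first by rewrite td.
  by rewrite oc od; lia.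
apply/hasP; exists d => //.
by rewrite (S0 H i1' dD) sd od eqxx td eqxx (leq_trans rl cs).
Qed.

Lemma rvec_eq lam mu Q k : 1 <= k ->
  rvec lam mu Q k = [seq a <- iota 1 (ell_mu lam mu Q k) | ~~ Hrow lam mu Q k a].
Proof. by case: k. Qed.

Lemma count_rvec lam mu Q k r : 1 <= k ->
  count (fun x => x <= r) (rvec lam mu Q k) =
  minn r (ell_mu lam mu Q k) - count (Hrow lam mu Q k) (iota 1 (minn r (ell_mu lam mu Q k))).
Proof.
move=> k1; rewrite rvec_eq // count_filter; set e := ell_mu lam mu Q k; set m := minn r e.
have me : m <= e by rewrite geq_minr.
rewrite -{1}(subnKC me) iotaD count_cat.
rewrite [X in _ + X](eq_in_count (a2 := pred0)) ?count_pred0 ?addn0; last first.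
  move=> a; rewrite mem_iota => /andP[h1 h2] /=.
  have ar : r < a by move: h1 h2; rewrite /m; lia.
  by rewrite leqNgt ar.
have e1 : count (predI (fun x => x <= r) (fun a => ~~ Hrow lam mu Q k a)) (iota 1 m) =
    count (predC (Hrow lam mu Q k)) (iota 1 m).
  apply: eq_in_count => a; rewrite mem_iota => /andP[_ h] /=.
  have ar : a <= r by move: h; rewrite /m; lia.
  by rewrite ar.
by rewrite e1 -[X in _ = X - _](size_iota 1 m) -(count_predC (Hrow lam mu Q k)) addKn.
Qed.

Lemma size_rvec n lam mu T Q k : Hyp n lam mu T Q -> 1 <= k ->
  size (rvec lam mu Q k) = ell_mu lam mu Q k - l0 lam mu Q k /\ l0 lam mu Q k <= ell_mu lam mu Q k.
Proof.
move=> H k1; have l0e : l0 lam mu Q k = count (Hrow lam mu Q k) (iota 1 (ell_mu lam mu Q k)).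
  by rewrite /l0 (A_eq _ H k1).
rewrite rvec_eq // size_filter l0e; split; last by apply: leq_trans (count_size _ _) _; rewrite size_iota.
by rewrite -[X in _ = X - _](size_iota 1) -(count_predC (Hrow lam mu Q k)) addKn.
Qed.

Lemma mem_leq_sumn (s : seq nat) x : x \in s -> x <= sumn s.
Proof.
elim: s => //= y s IH; rewrite inE => /orP[/eqP->|h]; first exact: leq_addr.
by apply: leq_trans (IH h) _; apply: leq_addl.
Qed.

Lemma nth_mono_ltn (s : seq nat) k l : sorted ltn s -> k <= l -> l < size s -> nth 0 s k <= nth 0 s l.
Proof.
move=> ss kl ls; rewrite leq_eqVlt in kl; case/orP: kl => [/eqP->//|kl].
apply: ltnW; apply: (sorted_ltn_nth ltn_trans 0 ss) => //; rewrite inE; lia.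
Qed.

Lemma SL (R R' : seq nat) : sorted ltn R -> sorted ltn R' ->
  (forall r, count (fun x => x <= r) R' <= count (fun x => x <= r) R) -> le_r R R'.
Proof.
move=> sR sR' H; split.
  have := H (sumn R'); rewrite (eq_in_count (a2 := predT)) ?count_predT; last first.
    by move=> x /mem_leq_sumn.
  by move=> h; apply: leq_trans h (count_size _ _).
move=> j js _; set y := nth 0 R' j.
have c1 : j.+1 <= count (fun x => x <= y) R'.
  apply: (@leq_trans (count (fun x => x <= y) (take j.+1 R'))).
    have -> : count (fun x => x <= y) (take j.+1 R') = size (take j.+1 R').
      apply/eqP; rewrite -all_count; apply/allP => z /(nthP 0)[k hk <-].
      rewrite size_takel // in hk; rewrite nth_take //.
      by apply: nth_mono_ltn => //; lia.
    by rewrite size_takel.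
  by rewrite -{2}(cat_take_drop j.+1 R') count_cat leq_addr.
have c2 := leq_trans c1 (H y).
rewrite leqNgt; apply/negP => hy.
case: (ltnP j (size R)) => jR; last first.
  by move: hy; rewrite nth_default.
move: c2; rewrite -(cat_take_drop j R) count_cat.
rewrite [X in _ + X](eq_in_count (a2 := pred0)) ?count_pred0 ?addn0; last first.
  move=> z /(nthP 0)[k hk <-]; rewrite nth_drop /=; apply/negbTE; rewrite -ltnNge.
  apply: leq_trans hy _; apply: nth_mono_ltn => //; first exact: leq_addr.
  by move: hk; rewrite size_drop ltn_subRL.
move=> h; have := leq_trans h (count_size _ _); rewrite size_takel ?(ltnW jR) //; lia.
Qed.
Lemma le_r_nil x : le_r x [::].
Proof. by split. Qed.

Lemma sorted_rvec lam mu Q k : 1 <= k -> sorted ltn (rvec lam mu Q k).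
Proof. by move=> k1; rewrite rvec_eq //; apply: sorted_filter; [apply: ltn_trans | apply: iota_ltn_sorted]. Qed.

Lemma core_d2 n lam mu T Q i : Hyp n lam mu T Q -> 2 <= i ->
  le_r (rvec lam mu Q i) (rvec lam mu Q i.-1).
Proof.
move=> H i2; have i1 : 1 <= i by lia. have i1' : 1 <= i.-1 by lia.
apply: SL; [exact: sorted_rvec | exact: sorted_rvec | move=> r].
rewrite !count_rvec //.
have [_ _ heL] := core_a H i1.
set e := ell_mu lam mu Q i; set L := ell_mu lam mu Q i.-1.
set s := minn r e; set s' := minn r L.
have F1 : count (Hrow lam mu Q i) (iota 1 s') = count (Hrow lam mu Q i) (iota 1 s) + (s' - s).
  case: (leqP r e) => hr.
    have es : s = r by rewrite /s; lia.
    have es' : s' = r by rewrite /s'; lia.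
    by rewrite es es' subnn addn0.
  have es : s = e by rewrite /s; lia.
  rewrite es; apply: (A_split H i1); rewrite /s'; apply/andP; split; lia.
have F2 := core_d s' H i2.
have F3 : count (Hrow lam mu Q i) (iota 1 s) <= s.
  by apply: leq_trans (count_size _ _) _; rewrite size_iota.
have ss : s <= s' by rewrite /s /s'; lia.
lia.
Qed.

Unset Implicit Arguments.

Theorem proposition3 (n : nat) (lam mu : seq nat) (Q : filling) :
  is_partition lam -> size lam <= 2 * n ->
  is_partition mu -> size mu <= n ->
  subpart mu lam ->
  in_Rec n lam mu Q ->
  forall i, 1 <= i <= QN lam mu Q ->
  let ell := ell_mu lam mu Q in
  let Qi := Qcnt lam mu Q i in
  (* (a) *)
  [/\ ((ell i.-1)%:Z = Qi%:Z + t0 lam mu Q i)%R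
        /\ ((ell i)%:Z <= Qi%:Z + t0 lam mu Q i)%R,
  (* (b) *)
      [/\ (0 <= t0 lam mu Q i.-1)%R, (t0 lam mu Q i.-1 <= t0 lam mu Q i)%R,
          (t0 lam mu Q i <= (ell i)%:Z)%R & ell i <= ell i.-1],
  (* (c) *)
      ((2 * n)%:Z >= Qi%:Z + 2%:Z * t0 lam mu Q i)%R
        /\ (Qi%:Z + 2%:Z * t0 lam mu Q i = (ell i.-1)%:Z + t0 lam mu Q i)%R,
  (* (d) *)
      le_r (rvec lam mu Q i) (rvec lam mu Q i.-1)
  & (* (e) *)
      [/\ forall x, x \in rvec lam mu Q i -> 1 <= x <= ell i,
          forall x, 1 <= x <= ell i -> 1 <= x <= ell i.-1
        & forall x, 1 <= x <= ell i.-1 ->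
            (1 <= x%:Z <= (2 * n)%:Z - t0 lam mu Q i)%R]].
Proof.
move=> plam slam pmu smu sub [T [LR DM]] i /andP[i1 _] ell Qi.
have H : Hyp n lam mu T Q by [].
rewrite /ell /Qi; clear ell Qi.
have [hq hl heL] := core_a H i1.
have hc := core_c H smu i1.
have t0i : (t0 lam mu Q i = (ell_mu lam mu Q i)%:Z - (l0 lam mu Q i)%:Z)%R.
  by rewrite /t0; case: i i1 {hq hl heL hc H}.
have [t0p d] : (t0 lam mu Q i.-1 <= t0 lam mu Q i)%R /\ le_r (rvec lam mu Q i) (rvec lam mu Q i.-1).
  case: (leqP i 1) => hi.
    have -> : i.-1 = 0 by lia.
    by split; [rewrite t0i /t0 /=; lia | exact: le_r_nil].
  have dd := core_d2 H hi; split => //.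
  have i1' : 1 <= i.-1 by lia.
  have [sz1 l1] := size_rvec H i1'; have [sz2 l2] := size_rvec H i1.
  have := dd.1; rewrite sz1 sz2 => hs.
  have -> : (t0 lam mu Q i.-1 = (ell_mu lam mu Q i.-1)%:Z - (l0 lam mu Q i.-1)%:Z)%R.
    by rewrite /t0; case: i hi {hq hl heL hc H t0i dd sz1 l1 sz2 l2 hs i1 i1'} => [|[]].
  rewrite t0i; lia.
have t0n : (0 <= t0 lam mu Q i.-1)%R.
  case: (leqP i 1) => hi; first by have -> : i.-1 = 0 by lia.
  have i1' : 1 <= i.-1 by lia.
  have [_ l1] := size_rvec H i1'.
  rewrite /t0; case: (i.-1 == 0) => //; lia.
rewrite t0i in t0p *.
split => //.
- split; lia.
- split => //; lia.
- split; lia.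
- split.
  + move=> x; rewrite rvec_eq // mem_filter mem_iota => /andP[_ /andP[h1 h2]]; apply/andP; split; lia.
  + move=> x /andP[h1 h2]; apply/andP; split; lia.
  + move=> x /andP[h1 h2]; apply/andP; split; lia.
Qed.
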